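(* Let $\mathcal{G}$ be a finite simple undirected graph with vertex set $\mathcal{N}=\{1,2,\ldots,N\}$, $N\ge 1$, and let $\boldsymbol{\mathcal{A}}$ denote the collection of all independent sets of vertices of $\mathcal{G}$ (including the empty set $\Phi$). For $i\in\mathcal{N}$ let $\mathcal{N}_i$ be the set of neighbours of $i$ in $\mathcal{G}$. For each $\mathcal{A}\in\boldsymbol{\mathcal{A}}$ let $\mathcal{B}_{\mathcal{A}}=\{j\in\mathcal{N}\setminus\mathcal{A} : \mathcal{N}_j\cap\mathcal{A}\neq\emptyset\}$ and $\mathcal{U}_{\mathcal{A}}=\mathcal{N}\setminus(\mathcal{A}\cup\mathcal{B}_{\mathcal{A}})$. Given parameters $\rho_i>0$, $i\in\mathcal{N}$, define the probability distribution on $\boldsymbol{\mathcal{A}}$ $$\pi(\mathcal{A})=\frac{\prod_{i\in\mathcal{A}}\rho_i}{\sum_{\mathcal{A}'\in\boldsymbol{\mathcal{A}}}\prod_{j\in\mathcal{A}'}\rho_j}$$ (an empty product equals $1$), and for each $i\in\mathcal{N}$ let $$x_i(\mathcal{G})=\sum_{\mathcal{A}\in\boldsymbol{\mathcal{A}}\,:\, i\in\mathcal{A}\cup\mathcal{U}_{\mathcal{A}}}\pi(\mathcal{A}),\qquad \bar{\Theta}(\mathcal{G})=\sum_{i=1}^N x_i(\mathcal{G}).$$ Let $\alpha(\mathcal{G})$ be the independence number of $\mathcal{G}$ (the cardinality of a maximum independent set). Then, taking $\rho_i=\rho$ for all $i\in\mathcal{N}$ and letting $\rho\to\infty$, we have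 $\bar{\Theta}(\mathcal{G})\to\alpha(\mathcal{G})$.
   Context: In the paper's model, vertices of $\mathcal{G}$ are co-channel WLAN cells, edges join cells that mutually block each other by carrier sensing, $\pi$ is the stationary distribution of the set of cells transmitting, $\rho_i$ is the ''access intensity'' of cell $i$, $x_i(\mathcal{G})$ is the fraction of time cell $i$ is not blocked (its normalized throughput), and $\bar{\Theta}(\mathcal{G})$ is the normalized network throughput. A maximum independent set is an independent set of largest cardinality. *)

(* Defs.v *)
From mathcomp Require Import all_boot all_order all_algebra.
From mathcomp Require Import all_classical all_reals all_analysis.
Set Implicit Arguments. Unset Strict Implicit. Unset Printing Implicit Defensive.
Import Order.TTheory GRing.Theory Num.Theory.
Local Open Scope ring_scope.

Section Defs.
Variables (N : nat) (e : rel 'I_N).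

Definition simple_graph := symmetric e /\ irreflexive e.

Definition nbhd (i : 'I_N) : {set 'I_N} := [set j | e i j].

Definition independent (A : {set 'I_N}) : bool :=
  [forall i in A, forall j in A, ~~ e i j].

Definition blocked (A : {set 'I_N}) : {set 'I_N} :=
  [set j in ~: A | nbhd j :&: A != finset.set0].

Definition unblocked (A : {set 'I_N}) : {set 'I_N} :=
  ~: (A :|: blocked A).

Variable R : realType.
Variable rho : 'I_N -> R.

Definition weight (A : {set 'I_N}) : R := \prod_(i in A) rho i.

Definition partition_fn : R := \sum_(A : {set 'I_N} | independent A) weight A.

Definition pi_dist (A : {set 'I_N}) : R := weight A / partition_fn.

Definition xthr (i : 'I_N) : R :=
  \sum_(A : {set 'I_N} | independent A && (i \in A :|: unblocked A)) pi_dist A.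

Definition Theta : R := \sum_(i < N) xthr i.
End Defs.

Definition alpha (N : nat) (e : rel 'I_N) : nat :=
  \max_(A : {set 'I_N} | independent e A) #|A|.

(* Main.v *)
Require Import Defs.
From mathcomp Require Import all_boot all_order all_algebra.
From mathcomp Require Import all_classical all_reals all_analysis.
From mathcomp Require Import lra.
Import Order.TTheory GRing.Theory Num.Theory numFieldNormedType.Exports.
Local Open Scope ring_scope.
Local Open Scope classical_set_scope.

Section Aux.
Variables (R : realType) (N : nat) (e : rel 'I_N).
Hypothesis Hs : simple_graph e.

Lemma indep_le A : independent e A -> (#|A| <= alpha e)%N.
Proof. by move=> iA; rewrite /alpha; apply: (@leq_bigmax_cond _ (independent e) (fun A : {set 'I_N} => #|A|)). Qed.

Lemma maxset_S A : independent e A -> #|A| = alpha e ->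
  A :|: unblocked e A = A.
Proof.
move=> iA cA; apply/setP => j; rewrite finset.in_setU; case jA: (j \in A) => //=.
apply/negbTE/negP => jU.
have H0 : forall a, a \in A -> ~~ e j a.
  move=> a aA; apply/negP => eja.
  move: jU; rewrite /unblocked finset.in_setC finset.in_setU jA /blocked inE finset.in_setC jA /=.
  move/negP; apply; apply/finset.set0Pn; exists a; by rewrite inE /nbhd inE eja aA.
have iB : independent e (j |: A).
  apply/forallP => x; apply/implyP => xin; apply/forallP => y; apply/implyP => yin.
  move: xin yin; rewrite !finset.in_setU1 => /orP[/eqP->|xA] /orP[/eqP->|yA].
  - by case: Hs => _ irr; rewrite irr.
  - exact: H0.
  - by case: Hs => sym _; rewrite sym; apply: H0.
  - by move/forallP: iA => /(_ x); rewrite xA /= => /forallP /(_ y); rewrite yA.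
have := @indep_le _ iB; rewrite cardsU1 jA cA /=. by rewrite ltnn.
Qed.

Lemma Theta_eq (rho : R) : Theta e (fun _ : 'I_N => rho) =
  (\sum_(A | independent e A) rho ^+ #|A| *+ #|A :|: unblocked e A|)
    / partition_fn e (fun _ : 'I_N => rho).
Proof.
rewrite /Theta /xthr (exchange_big_dep (independent e)) /=; last by move=> i A _ /andP[].
rewrite mulr_suml; apply: eq_bigr => A iA.
rewrite (eq_bigl (fun i => i \in A :|: unblocked e A)); last by move=> i; rewrite iA.
by rewrite sumr_const /pi_dist /weight prodr_const mulrnAl.
Qed.

Lemma Z_ge (rho : R) : 0 <= rho -> rho ^+ alpha e <= partition_fn e (fun _ : 'I_N => rho).
Proof.
move=> r0.
have : (0 < #|independent e|)%N.
  apply/card_gt0P; exists finset.set0; rewrite unfold_in /independent.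
  by apply/forallP => x; rewrite finset.in_set0.
move/(eq_bigmax_cond (fun A : {set 'I_N} => #|A|)) => [A0 iA0 hA0].
rewrite /partition_fn (bigD1 A0) //= /weight prodr_const.
have -> : alpha e = #|A0| by rewrite -hA0.
rewrite lerDl sumr_ge0 // => A _; rewrite prodr_const; exact: exprn_ge0.
Qed.

End Aux.

Lemma alpha_leN (N : nat) (e : rel 'I_N) : (alpha e <= N)%N.
Proof.
rewrite /alpha; apply/bigmax_leqP => A _.
by rewrite -[X in (_ <= X)%N]card_ord; exact: max_card.
Qed.

Lemma Dbound (R : realType) (N : nat) (e : rel 'I_N) (rho : R) :
  simple_graph e -> 1 <= rho ->
  `| \sum_(A | independent e A)
       rho ^+ #|A| * ((#|A :|: unblocked e A|)%:R - (alpha e)%:R) |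
  <= (\sum_(A | independent e A) (N%:R : R)) * (rho ^+ alpha e / rho).
Proof.
move=> Hs r1.
have r0 : 0 < rho by lra.
rewrite mulr_suml; apply: (le_trans (ler_norm_sum _ _ _)); apply: ler_sum => A iA.
have := @indep_le N e A iA; rewrite leq_eqVlt => /orP[/eqP cA|ltA].
  rewrite (@maxset_S N e Hs A iA cA) cA subrr mulr0 normr0 mulr_ge0 ?ler0n //.
  by rewrite divr_ge0 ?exprn_ge0 // ltW.
rewrite normrM ger0_norm ?exprn_ge0 ?(ltW r0) // mulrC.
apply: ler_pM; rewrite ?normr_ge0 ?exprn_ge0 ?(ltW r0) //.
  have h1 : ((#|A :|: unblocked e A|)%:R : R) <= N%:R.
    by rewrite ler_nat -[X in (_ <= X)%N]card_ord max_card.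
  have h2 : ((alpha e)%:R : R) <= N%:R by rewrite ler_nat alpha_leN.
  have h3 : (0 : R) <= (#|A :|: unblocked e A|)%:R by [].
  have h4 : (0 : R) <= (alpha e)%:R by [].
  rewrite ler_norml; apply/andP; split; lra.
rewrite ler_pdivlMr // -exprSr; exact: ler_weXn2l.
Qed.

Theorem theorem1 (R : realType) (N : nat) (e : rel 'I_N) :
  (0 < N)%N -> simple_graph e ->
  Theta e (fun _ : 'I_N => rho) @[rho --> +oo] --> ((alpha e)%:R : R).
Proof.
move=> _ Hs.
set K := \sum_(A | independent e A) (N%:R : R).
have K0 : 0 <= K by apply: sumr_ge0.
apply/cvgrPdist_le => eps eps0.
apply: filterS (nbhs_pinfty_gt (r := 1 + K / eps) _); last by rewrite num_real.
move=> rho Hrho.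
have Ke : 0 <= K / eps by rewrite divr_ge0 // ltW.
have r1 : 1 <= rho by lra.
have r0 : 0 < rho by lra.
have Zge := @Z_ge R N e rho (ltW r0).
set Z := partition_fn e (fun _ : 'I_N => rho) in Zge *.
have Z0 : 0 < Z by apply: lt_le_trans Zge; rewrite exprn_gt0.
set D := \sum_(A | independent e A)
       rho ^+ #|A| * ((#|A :|: unblocked e A|)%:R - (alpha e)%:R).
have hD : \sum_(A | independent e A) rho ^+ #|A| *+ #|A :|: unblocked e A|
          - (alpha e)%:R * Z = D.
  rewrite /Z /partition_fn mulr_sumr -sumrB; apply: eq_bigr => A _.
  by rewrite /weight prodr_const mulrBr mulr_natr [_ * rho ^+ _]mulrC.
have hT : Theta e (fun _ : 'I_N => rho) - (alpha e)%:R = D / Z.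
  by rewrite Theta_eq -/Z -hD mulrBl mulfK // gt_eqF.
rewrite distrC hT normrM normfV (gtr0_norm Z0) ler_pdivrMr //.
have := @Dbound R N e rho Hs r1; rewrite -/D -/K => HD.
apply: le_trans HD _.
rewrite mulrCA mulrC; apply: ler_pM => //.
- by rewrite divr_ge0 // ltW.
- by rewrite exprn_ge0 // ltW.
- rewrite ler_pdivrMr // mulrC -ler_pdivrMr //.
have Hr := ltW Hrho; apply: le_trans Hr; rewrite lerDr ler01 //.
Qed.
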